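(* Let $T$ be a left V-ring. Then either $T$ has a maximal subring or $T$ is a duo ring. In particular, if $T$ is a left V-ring with no maximal subring, then $T$ is also a right V-ring.
   Context: All rings are associative with identity $1\neq0$; subrings contain the identity. A maximal subring of $T$ is a proper subring with no subring strictly between it and $T$. A ring $T$ is a left (resp. right) V-ring if every simple left (resp. right) $T$-module is injective. A ring is duo if every left ideal and every right ideal is two-sided. *)

(* Defs.v *)
(* Left T-modules are MathComp's lmodType T (scalar ring may be
   noncommutative); right T-modules are left modules over the converse ring T^c. *)
From HB Require Import structures.
From mathcomp Require Import all_boot all_order all_algebra.
Set Implicit Arguments. Unset Strict Implicit. Unset Printing Implicit Defensive.
Import GRing.Theory.
Local Open Scope ring_scope.

Definition is_subring (T : nzRingType) (S : T -> Prop) : Prop :=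
  S 1 /\ (forall x y, S x -> S y -> S (x - y)) /\ (forall x y, S x -> S y -> S (x * y)).

Definition maximal_subring (T : nzRingType) (S : T -> Prop) : Prop :=
  [/\ is_subring S,
      (exists x, ~ S x) &
      forall S' : T -> Prop, is_subring S' -> (forall x, S x -> S' x) ->
        (forall x, S' x <-> S x) \/ (forall x, S' x)].

Definition has_maximal_subring (T : nzRingType) : Prop :=
  exists S : T -> Prop, maximal_subring S.

Definition additive_subgroup (T : nzRingType) (I : T -> Prop) : Prop :=
  I 0 /\ forall x y, I x -> I y -> I (x - y).

Definition left_ideal (T : nzRingType) (I : T -> Prop) : Prop :=
  additive_subgroup I /\ forall r x, I x -> I (r * x).

Definition right_ideal (T : nzRingType) (I : T -> Prop) : Prop :=
  additive_subgroup I /\ forall r x, I x -> I (x * r).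

Definition two_sided_ideal (T : nzRingType) (I : T -> Prop) : Prop :=
  left_ideal I /\ right_ideal I.

Definition duo_ring (T : nzRingType) : Prop :=
  (forall I : T -> Prop, left_ideal I -> two_sided_ideal I) /\
  (forall I : T -> Prop, right_ideal I -> two_sided_ideal I).

Definition submodule (R : nzRingType) (M : lmodType R) (P : M -> Prop) : Prop :=
  [/\ P 0, (forall x y, P x -> P y -> P (x + y)) & (forall (a : R) x, P x -> P (a *: x))].

Definition simple_module (R : nzRingType) (M : lmodType R) : Prop :=
  (exists m : M, m <> 0) /\
  forall P : M -> Prop, submodule P -> (forall x, P x -> x = 0) \/ (forall x, P x).

Definition injective_module (R : nzRingType) (M : lmodType R) : Prop :=
  forall (A B : lmodType R) (f : {linear A -> B}) (g : {linear A -> M}),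
    injective f -> exists h : {linear B -> M}, forall a, h (f a) = g a.

Definition left_V_ring (T : nzRingType) : Prop :=
  forall M : lmodType T, simple_module M -> injective_module M.

Definition right_V_ring (T : nzRingType) : Prop :=
  forall M : lmodType T^c, simple_module M -> injective_module M.

(* Main.v *)
From HB Require Import structures.
Require Import Defs.
From mathcomp Require Import all_boot all_order all_algebra.
From mathcomp Require Import boolp classical_sets.
Set Implicit Arguments. Unset Strict Implicit. Unset Printing Implicit Defensive.
Import GRing.Theory.
Local Open Scope ring_scope.

Section QuotDefs.
Variables (R : nzRingType) (K : R -> Prop).
Definition qT (hK : left_ideal K) := {X : R -> Prop | exists t, X = fun u => K (u - t)}.
End QuotDefs.

HB.instance Definition _ R K hK := gen_eqMixin (@qT R K hK).
HB.instance Definition _ R K hK := gen_choiceMixin (@qT R K hK).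

Section Quot.
Variables (R : nzRingType) (K : R -> Prop) (hK : left_ideal K).
Local Notation Q := (qT hK).

Lemma K0 : K 0. Proof. by case: hK => [[]]. Qed.
Lemma KB x y : K x -> K y -> K (x - y). Proof. by case: hK => [[_ H] _]; apply: H. Qed.
Lemma KN x : K x -> K (- x). Proof. by move=> kx; rewrite -sub0r; apply: KB => //; apply: K0. Qed.
Lemma KD x y : K x -> K y -> K (x + y).
Proof. by move=> kx ky; rewrite -[y]opprK; apply: KB => //; apply: KN. Qed.
Lemma KM r x : K x -> K (r * x). Proof. by case: hK => _ H; apply: H. Qed.

Definition cls (t : R) : Q := exist _ (fun u => K (u - t)) (ex_intro _ t erefl).
Definition rep (X : Q) : R := projT1 (cid (proj2_sig X)).
Lemma repK X : cls (rep X) = X.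
Proof.
case: X => X pX; rewrite /rep /=; case: (cid pX) => t e /=.
by rewrite /cls; apply: eq_exist; rewrite e.
Qed.
Lemma clsE s t : (cls s = cls t) <-> K (s - t).
Proof.
split.
  move=> /(congr1 (fun X : Q => sval X s)) /= e.
  by rewrite -e subrr; apply: K0.
move=> kst; rewrite /cls; apply: eq_exist; apply: funext => u; apply: propext; split.
  by move=> kus; have := KD kus kst; rewrite addrA subrK.
by move=> kut; have := KB kut kst; rewrite opprB addrA subrK.
Qed.
Lemma cls_eq s t : K (s - t) -> cls s = cls t. Proof. by move/clsE. Qed.

Definition qadd (X Y : Q) := cls (rep X + rep Y).
Definition qopp (X : Q) := cls (- rep X).
Definition qzero := cls 0.
Definition qscale (r : R) (X : Q) := cls (r * rep X).

Lemma repcls t : K (rep (cls t) - t).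
Proof. by apply/clsE; rewrite repK. Qed.

Lemma qaddE s t : qadd (cls s) (cls t) = cls (s + t).
Proof.
apply: cls_eq; have := KD (repcls s) (repcls t).
by congr K; rewrite opprD !addrA; congr (_ - _); rewrite addrAC.
Qed.
Lemma qoppE s : qopp (cls s) = cls (- s).
Proof. by apply: cls_eq; have := KN (repcls s); congr K; rewrite opprB opprK addrC. Qed.
Lemma qscaleE r s : qscale r (cls s) = cls (r * s).
Proof. by apply: cls_eq; have := KM r (repcls s); congr K; rewrite mulrBr. Qed.

Lemma cls_ind (P : Q -> Prop) : (forall t, P (cls t)) -> forall X, P X.
Proof. by move=> H X; rewrite -(repK X). Qed.

Lemma qaddA : associative qadd.
Proof. by elim/cls_ind => x; elim/cls_ind => y; elim/cls_ind => z; rewrite !qaddE addrA. Qed.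
Lemma qaddC : commutative qadd.
Proof. by elim/cls_ind => x; elim/cls_ind => y; rewrite !qaddE addrC. Qed.
Lemma qadd0 : left_id qzero qadd.
Proof. by elim/cls_ind => x; rewrite /qzero qaddE add0r. Qed.
Lemma qaddN : left_inverse qzero qopp qadd.
Proof. by elim/cls_ind => x; rewrite qoppE qaddE addNr. Qed.

HB.instance Definition _ := GRing.isZmodule.Build Q qaddA qaddC qadd0 qaddN.
Lemma clsD s t : cls s + cls t = cls (s + t). Proof. exact: qaddE. Qed.

Lemma qscaleA a b v : qscale a (qscale b v) = qscale (a * b) v.
Proof. by elim/cls_ind: v => x; rewrite !qscaleE mulrA. Qed.
Lemma qscale1 : left_id 1 qscale.
Proof. by elim/cls_ind => x; rewrite qscaleE mul1r. Qed.
Lemma qscaleDr : right_distributive qscale +%R.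
Proof. by move=> a; elim/cls_ind => x; elim/cls_ind => y; rewrite clsD !qscaleE clsD mulrDr. Qed.
Lemma qscaleDl v : {morph qscale^~ v: a b / a + b}.
Proof. by elim/cls_ind: v => x a b; rewrite /= !qscaleE clsD mulrDl. Qed.

HB.instance Definition _ := GRing.Zmodule_isLmodule.Build R Q qscaleA qscale1 qscaleDr qscaleDl.

Lemma clsN s : - cls s = cls (- s). Proof. exact: qoppE. Qed.
Lemma cls0 : (0 : Q) = cls 0. Proof. by []. Qed.
Lemma clsZ r s : r *: cls s = cls (r * s). Proof. exact: qscaleE. Qed.
Lemma clsB s t : cls s - cls t = cls (s - t). Proof. by rewrite clsN clsD. Qed.
Lemma cls_eq0 s : (cls s = 0) <-> K s.
Proof. by rewrite cls0 clsE subr0. Qed.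
End Quot.

Lemma subring_add (R : nzRingType) (S : R -> Prop) : is_subring S ->
  forall x y, S x -> S y -> S (x + y).
Proof.
move=> [S1 [SB _]] x y Sx Sy.
have S0 : S 0 by rewrite -(subrr 1); exact: (SB).
by rewrite -[y]opprK -[- y]sub0r; apply: (SB) => //; apply: (SB).
Qed.

Lemma annB (R : nzRingType) (M : lmodType R) : ~ has_maximal_subring R ->
  simple_module M -> forall (m0 : M) n t, n *: m0 = 0 -> (n * t) *: m0 = 0.
Proof.
move=> nomax [_ simp] m0 n0 t0 h0; apply: contrapT => H; apply: nomax.
pose S x := forall n, n *: m0 = 0 -> (n * x) *: m0 = 0.
have N0S n : n *: m0 = 0 -> S n.
  by move=> hn n' hn'; rewrite -scalerA hn scaler0.
exists S; split.
- split; first by move=> n; rewrite mulr1.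
  split=> x y hx hy n hn; first by rewrite mulrBr scalerBl hx // hy // subr0.
  by rewrite mulrA; apply: hy; apply: hx.
- by exists t0 => St0; apply: H; apply: St0.
move=> S' subS' sub; have [S'1 [S'B S'M]] := subS'.
case: (pselect (exists x, S' x /\ ~ S x)); last first.
  move=> nex; left => x; split; last exact: sub.
  by move=> S'x; apply: contrapT => nSx; apply: nex; exists x.
move=> [s' [S's nSs]]; right => t.
have [n1 [hn1 hne]] : exists n1, n1 *: m0 = 0 /\ (n1 * s') *: m0 <> 0.
  apply: contrapT => nE; apply: nSs => n hn; apply: contrapT => ne.
  by apply: nE; exists n.
pose v := (n1 * s') *: m0.
pose P (z : M) := exists r, z = r *: v.
have subP : submodule P.
  split; first by exists 0; rewrite scale0r.
    by move=> x y [r1 ->] [r2 ->]; exists (r1 + r2); rewrite scalerDl.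
  by move=> a x [r ->]; exists (a * r); rewrite scalerA.
case: (simp P subP) => [all0|allP].
  by exfalso; apply: hne; apply: all0; exists 1; rewrite scale1r.
have [u hu] := allP m0.
have -> : t = (t - t * u * n1 * s') + (t * u * n1) * s' by rewrite subrK.
apply: (subring_add subS'); last first.
  apply: S'M => //; apply: sub; apply: N0S.
  by rewrite -scalerA hn1 scaler0.
apply: sub; apply: N0S.
rewrite scalerBl -!mulrA -!scalerA.
by rewrite (scalerA n1) -/v -hu subrr.
Qed.

Section Inj.
Variables (R : nzRingType) (M : lmodType R).
Hypothesis reg : forall x : R, exists y, x = x * y * x.
Hypothesis simpM : simple_module M.
Hypothesis two : forall (m0 : M) n t, n *: m0 = 0 -> (n * t) *: m0 = 0.

Lemma gen_all (v : M) : v <> 0 -> forall z : M, exists s, z = s *: v.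
Proof.
move=> v0; pose P (z : M) := exists r, z = r *: v.
have subP : submodule P.
  split; first by exists 0; rewrite scale0r.
    by move=> x y [r1 ->] [r2 ->]; exists (r1 + r2); rewrite scalerDl.
  by move=> a x [r ->]; exists (a * r); rewrite scalerA.
case: simpM => _ /(_ P subP) [all0|//].
by exfalso; apply: v0; apply: all0; exists 1; rewrite scale1r.
Qed.

Lemma baer (I : R -> Prop) (phi : R -> M) : left_ideal I ->
  (forall x y, I x -> I y -> phi (x + y) = phi x + phi y) ->
  (forall r x, I x -> phi (r * x) = r *: phi x) ->
  exists m, forall x, I x -> phi x = x *: m.
Proof.
move=> [[I0 IB] IM] phiD phiM.
have [m0 m00] := simpM.1.
have annall n : n *: m0 = 0 -> forall z : M, n *: z = 0.
  move=> hn z; have [s ->] := gen_all m00 z.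
  by rewrite scalerA two.
have phi0 x : I x -> x *: m0 = 0 -> phi x = 0.
  move=> Ix hx; have [y ey] := reg x.
  by rewrite ey phiM -?ey // annall // two.
case: (pselect (exists i, I i /\ i *: m0 <> 0)); last first.
  move=> nex; exists 0 => x Ix; rewrite scaler0; apply: phi0 => //.
  by apply: contrapT => ne; apply: nex; exists x.
move=> [i [Ii hi]]; have [s hs] := gen_all hi m0.
have Ii0 : I (s * i) by apply: IM.
exists (phi (s * i)) => x Ix.
have IxM : I (x * (s * i)) by apply: IM.
have -> : x = x * (s * i) + x * (1 - s * i) by rewrite -mulrDr subrKC mulr1.
have Ix2 : I (x * (1 - s * i)) by rewrite mulrBr mulr1; apply: IB.
rewrite phiD // phiM // (phi0 _ Ix2); last first.
  by rewrite -scalerA scalerBl scale1r -scalerA -hs subrr scaler0.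
by rewrite addr0 -mulrDr subrKC mulr1.
Qed.

Section Ext.
Variables (A B : lmodType R) (f : {linear A -> B}) (g : {linear A -> M}).
Hypothesis finj : injective f.

Definition valid (p : (B -> Prop) * (B -> M)) :=
  [/\ submodule p.1, (forall a, p.1 (f a)), (forall a, p.2 (f a) = g a),
      (forall x y, p.1 x -> p.1 y -> p.2 (x + y) = p.2 x + p.2 y) &
      (forall r x, p.1 x -> p.2 (r *: x) = r *: p.2 x)].

Definition PT := {p | valid p}.
Definition Cp (p : PT) := (sval p).1.
Definition hp (p : PT) := (sval p).2.
Definition Rl (p q : PT) : bool :=
  `[< (forall x, Cp p x -> Cp q x) /\ (forall x, Cp p x -> hp q x = hp p x) >].

Definition C0 (x : B) := exists a, x = f a.
Definition h0 (x : B) : M :=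
  match pselect (C0 x) with left e => g (sval (cid e)) | right _ => 0 end.
Lemma h0f a : h0 (f a) = g a.
Proof.
rewrite /h0; case: pselect => [e|ne]; last by exfalso; apply: ne; exists a.
by case: cid => a' /= e'; rewrite (finj e').
Qed.
Lemma valid0 : valid (C0, h0).
Proof.
split => /=.
- split; first by exists 0; rewrite linear0.
    by move=> x y [a ->] [b ->]; exists (a + b); rewrite linearD.
  by move=> r x [a ->]; exists (r *: a); rewrite linearZ.
- by move=> a; exists a.
- exact: h0f.
- by move=> x y [a ->] [b ->]; rewrite -linearD !h0f linearD.
- by move=> r x [a ->]; rewrite -linearZ !h0f linearZ.
Qed.
Definition t0 : PT := exist _ _ valid0.

Lemma Rl_refl : forall t, Rl t t.
Proof. by move=> t; apply/asboolP; split. Qed.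
Lemma Rl_trans : forall r s t, Rl r s -> Rl s t -> Rl r t.
Proof.
move=> r s t /asboolP [rs1 rs2] /asboolP [st1 st2]; apply/asboolP; split.
  by move=> x /rs1 /st1.
by move=> x hx; rewrite st2 ?rs2 //; apply: rs1.
Qed.

Section Chain.
Variable (Ch : set PT).
Hypothesis tot : total_on Ch Rl.
Variable p0 : PT.
Hypothesis Chp0 : Ch p0.
Definition Cu (x : B) := exists p, Ch p /\ Cp p x.
Definition hu (x : B) : M :=
  match pselect (Cu x) with left e => hp (sval (cid e)) x | right _ => 0 end.
Lemma huE p x : Ch p -> Cp p x -> hu x = hp p x.
Proof.
move=> Chp Cx; rewrite /hu; case: pselect => [e|ne]; last first.
  by exfalso; apply: ne; exists p.
case: cid => q /= [Chq Cqx].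
case: (tot Chp Chq) => /asboolP [s1 s2]; first by rewrite s2.
by rewrite s2.
Qed.
Lemma both x y : Cu x -> Cu y -> exists p, [/\ Ch p, Cp p x & Cp p y].
Proof.
move=> [p [Chp Cx]] [q [Chq Cy]].
case: (tot Chp Chq) => /asboolP [s1 s2].
  by exists q; split => //; apply: s1.
by exists p; split => //; apply: s1.
Qed.
Lemma valid_u : valid (Cu, hu).
Proof.
have vp (p : PT) : valid (sval p) by case: p.
split => /=.
- split.
  + by exists p0; split => //; case: (vp p0) => [[]].
  + move=> x y /both /[apply] [[p [Chp Cx Cy]]]; exists p; split => //.
    by case: (vp p) => [[_ Hadd _]] _ _ _ _; apply: Hadd.
  + move=> r x [p [Chp Cx]]; exists p; split => //.
    by case: (vp p) => [[_ _ Hs]] _ _ _ _; apply: Hs.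
- move=> a; exists p0; split => //.
  by have [_ Hf _ _ _] := vp p0; apply: Hf.
- move=> a; have [_ Hf Hg _ _] := vp p0.
  by rewrite (@huE p0) //; [exact: Hg | exact: Hf].
- move=> x y /both /[apply] [[p [Chp Cx Cy]]].
  have [[_ Hadd _] _ _ hD _] := vp p.
  by rewrite !(@huE p) //; [apply: hD | apply: Hadd].
- move=> r x [p [Chp Cx]].
  have [[_ _ Hs] _ _ _ hZ] := vp p.
  by rewrite !(@huE p) //; [apply: hZ | apply: Hs].
Qed.
Definition tu : PT := exist _ _ valid_u.
Lemma tu_ub : forall s, Ch s -> Rl s tu.
Proof.
move=> s Chs; apply/asboolP; split => x Cx; first by exists s.
exact: huE.
Qed.
End Chain.

Lemma chains_bounded : forall Ch : set PT, total_on Ch Rl -> exists t, forall s, Ch s -> Rl s t.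
Proof.
move=> Ch tot; case: (pselect (exists p, Ch p)) => [[p Chp]|ne].
  by exists (tu tot Chp); apply: tu_ub.
by exists t0 => s Chs; exfalso; apply: ne; exists s.
Qed.


Lemma subm_sub (P : B -> Prop) : submodule P -> forall x y, P x -> P y -> P (x - y).
Proof.
move=> [P0 PD PZ] x y Px Py; apply: PD => //.
by rewrite -scaleN1r; apply: PZ.
Qed.

Section Step.
Variable t : PT.
Variables (b : B) (m : M).
Hypothesis hm : forall r, Cp t (r *: b) -> hp t (r *: b) = r *: m.
Let vt : valid (sval t). Proof. by case: t. Qed.

Definition C' (x : B) := exists cr : B * R, Cp t cr.1 /\ x = cr.1 + cr.2 *: b.
Definition h' (x : B) : M :=
  match pselect (C' x) with
  | left e => hp t (sval (cid e)).1 + (sval (cid e)).2 *: m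
  | right _ => 0 end.

Lemma hpB c c' : Cp t c -> Cp t c' -> hp t (c' - c) = hp t c' - hp t c.
Proof.
have [sub _ _ hD _] := vt => Cc Cc'.
have := hD (c' - c) c (subm_sub sub Cc' Cc) Cc.
by move=> e; rewrite subrK in e; rewrite /hp e addrK.
Qed.

Lemma h'E c r : Cp t c -> h' (c + r *: b) = hp t c + r *: m.
Proof.
move=> Cc; rewrite /h'; case: pselect => [e|ne]; last first.
  by exfalso; apply: ne; exists (c, r).
case: cid => [[c' r']] /= [Cc' e'].
have [sub _ _ _ _] := vt.
have eb : (r - r') *: b = c' - c.
  by rewrite scalerBl -[r *: b](addKr c) e' addrA addrK addrC.
have hc' : hp t c' = (r - r') *: m + hp t c.
  by rewrite -hm eb ?hpB ?subrK //; apply: subm_sub.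
by rewrite hc' scalerBl addrAC subrK addrC.
Qed.

Lemma valid' : valid (C', h').
Proof.
have [[C0 CD CZ] Cf hf hD hZ] := vt.
split => /=.
- split.
  + by exists (0, 0); split => //=; rewrite scale0r addr0.
  + move=> x y [[c r] /= [Cc ->]] [[c2 r2] /= [Cc2 ->]].
    exists (c + c2, r + r2); split => /=; first exact: CD.
    by rewrite scalerDl addrACA.
  + move=> a x [[c r] /= [Cc ->]]; exists (a *: c, a * r); split => /=.
      exact: CZ.
    by rewrite scalerDr scalerA.
- by move=> a; exists (f a, 0); split => /=; [exact: Cf | rewrite scale0r addr0].
- move=> a; rewrite -[f a]addr0 -(scale0r b) h'E //; last exact: Cf.
  by rewrite (scale0r m) addr0; apply: hf.
- move=> x y [[c r] /= [Cc ->]] [[c2 r2] /= [Cc2 ->]].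
  rewrite addrACA -scalerDl !h'E //; last exact: CD.
  by rewrite /hp hD // scalerDl addrACA.
- move=> a x [[c r] /= [Cc ->]].
  rewrite scalerDr scalerA !h'E //; last exact: CZ.
  by rewrite /hp hZ // scalerDr scalerA.
Qed.
Definition t' : PT := exist _ _ valid'.
Lemma Rl_t' : Rl t t'.
Proof.
apply/asboolP; split => x Cx; first by exists (x, 0); split => //=; rewrite scale0r addr0.
by rewrite /hp /= -{1}[x]addr0 -(scale0r b) h'E // (scale0r m) addr0.
Qed.
Lemma b_in_t' : Cp t' b.
Proof. by exists (0, 1); split => /=; [case: vt => [[]] | rewrite scale1r add0r]. Qed.
End Step.

Lemma ext_exists : exists h : {linear B -> M}, forall a, h (f a) = g a.
Proof.
have [t tmax] := ZL_preorder t0 Rl_refl Rl_trans chains_bounded.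
have vt : valid (sval t) by exact: (proj2_sig t).
have [[C0 CD CZ] Cf hf hD hZ] := vt.
have allC : forall b, Cp t b.
  move=> b; apply: contrapT => nb.
  pose I r := Cp t (r *: b).
  have Iid : left_ideal I.
    split; first split.
    - by rewrite /I scale0r.
    - by move=> x y Ix Iy; rewrite /I scalerBl; apply: subm_sub.
    - by move=> r x Ix; rewrite /I -scalerA; apply: CZ.
  have [m hm] : exists m, forall x, I x -> hp t (x *: b) = x *: m.
    apply: (@baer I (fun r => hp t (r *: b)) Iid).
      by move=> x y Ix Iy; rewrite scalerDl /hp hD.
    by move=> r x Ix; rewrite -scalerA /hp hZ.
  have /asboolP [s1 _] := tmax _ (Rl_t' hm).
  by apply: nb; apply: s1; apply: b_in_t'.
have lin : forall a x y, hp t (a *: x + y) = a *: hp t x + hp t y.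
  by move=> a x y; rewrite /hp hD ?hZ //; apply: allC.
pose hl : {linear B -> M} := HB.pack (hp t) (GRing.isLinear.Build R B M *:%R (hp t) lin).
by exists hl => a; apply: hf.
Qed.
End Ext.

Lemma inj_main : injective_module M.
Proof. by move=> A B f g finj; apply: ext_exists. Qed.
End Inj.

Lemma zorn_ideal (T : nzRingType) (L : T -> Prop) (a : T) :
  left_ideal L -> ~ L a ->
  exists K : T -> Prop, [/\ left_ideal K, (forall x, L x -> K x), ~ K a &
    forall J, left_ideal J -> (forall x, K x -> J x) -> ~ J a -> forall x, J x -> K x].
Proof.
move=> hL nLa.
pose P (X : set T) := X = set0 \/ [/\ left_ideal X, (forall x, L x -> X x) & ~ X a].
have nonemptyP X : P X -> forall x, X x -> [/\ left_ideal X, (forall x, L x -> X x) & ~ X a].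
  by case=> [-> //|//].
have [K [PK Kmax]] : exists A, P A /\ forall B, (A `<` B)%classic -> ~ P B.
  apply: Zorn_bigcup => F FP Ftot.
  case: (pselect (exists X x, F X /\ X x)); last first.
    move=> ne; left; apply/seteqP; split => // x [X FX Xx].
    by exfalso; apply: ne; exists X, x.
  move=> [X0 [x0 [FX0 X0x0]]].
  have [[[I00 I0B] I0M] I0L I0a] := nonemptyP _ (FP _ FX0) _ X0x0.
  have idF X x : F X -> X x -> left_ideal X by move=> FX Xx; case: (nonemptyP _ (FP _ FX) _ Xx).
  right; split.
  - split; first split.
    + by exists X0.
    + move=> x y [X FX Xx] [Y FY Yy].
      case: (Ftot _ _ FX FY) => [XY|YX].
        exists Y => //; case: (idF _ _ FY Yy) => [[_ YB] _]; apply: YB => //; exact: XY.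
      exists X => //; case: (idF _ _ FX Xx) => [[_ XB] _]; apply: XB => //; exact: YX.
    + by move=> r x [X FX Xx]; exists X => //; case: (idF _ _ FX Xx) => _ XM; apply: XM.
  - by move=> x Lx; exists X0 => //; apply: I0L.
  - by move=> [X FX Xa]; have [_ _] := nonemptyP _ (FP _ FX) _ Xa; apply.
have L0 : L 0 by case: hL => [[]].
have [hK LK nKa] : [/\ left_ideal K, (forall x, L x -> K x) & ~ K a].
  case: PK => [K0|//]; exfalso; apply: (Kmax L); last by right.
  by rewrite K0; split => // /(_ 0 L0).
exists K; split => // J hJ KJ nJa x Jx; apply: contrapT => nKx.
by apply: (Kmax J); [split => // /(_ x Jx) | right; split => // y /LK /KJ].
Qed.

Lemma sq_div (T : nzRingType) : left_V_ring T -> ~ has_maximal_subring T ->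
  forall a : T, exists s, a = s * (a * a).
Proof.
move=> lv nomax a; apply: contrapT => nex.
pose L x := exists s, x = s * (a * a).
have hL : left_ideal L.
  split; first split.
  - by exists 0; rewrite mul0r.
  - by move=> x y [s1 ->] [s2 ->]; exists (s1 - s2); rewrite mulrBl.
  - by move=> r x [s ->]; exists (r * s); rewrite mulrA.
have nLa : ~ L a by move=> [s e]; apply: nex; exists s.
have [K [hK LK nKa Kmax]] := zorn_ideal hL nLa.
pose K' x := K (x * a).
have hK' : left_ideal K'.
  split; first split.
  - by rewrite /K' mul0r; apply: K0 hK.
  - by move=> x y; rewrite /K' mulrBl; apply: KB.
  - by move=> r x; rewrite /K' -mulrA; apply: KM.
pose Q' := qT hK'.
pose Q := qT hK.
have cls1 : (cls hK' 1 : Q') <> 0.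
  by move/(cls_eq0 hK'); rewrite /K' mul1r.
have simpQ' : simple_module Q'.
  split; first by exists (cls hK' 1).
  move=> P [P0 PD PZ].
  case: (pselect (exists X, P X /\ X <> 0)); last first.
    move=> ne; left => x Px; apply: contrapT => nx; apply: ne; exists x.
    by split.
  move=> [X [PX X0]]; right.
  move: PX X0; rewrite -(repK X); set t := rep X => PX X0.
  have nKt : ~ K (t * a) by move=> kt; apply: X0; apply/(cls_eq0 hK').
  pose J x := exists ks : T * T, K ks.1 /\ x = ks.1 + ks.2 * (t * a).
  have hJ : left_ideal J.
    split; first split.
    - by exists (0, 0); rewrite /= mul0r addr0; split => //; apply: K0 hK.
    - move=> x y [[k1 s1] [/= k1K ->]] [[k2 s2] [/= k2K ->]].
      exists (k1 - k2, s1 - s2); split; first exact: KB.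
      by rewrite /= mulrBl opprD addrACA.
    - move=> r x [[k s] [/= kK ->]]; exists (r * k, r * s); split; first exact: KM.
      by rewrite /= mulrDr mulrA.
  have Ja : J a.
    apply: contrapT => nJa.
    apply: nKt; apply: (Kmax J hJ) => //.
      by move=> x Kx; exists (x, 0); rewrite /= mul0r addr0.
    by exists (0, 1); rewrite /= mul1r add0r; split => //; apply: K0 hK.
  case: Ja => [[k s] [/= kK ea]].
  have c1 : cls hK' 1 = s *: cls hK' t.
    rewrite clsZ; apply/(clsE hK'); rewrite /K' mulrBl mul1r.
    by rewrite [X in X - _]ea -mulrA addrK.
  move=> Y; rewrite -(repK Y) -[rep Y]mulr1 -clsZ c1.
  by apply: (PZ); apply: (PZ).
pose fq (X : Q') : Q := cls hK (@rep _ _ hK' X * a).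
have fqE u : fq (cls hK' u) = cls hK (u * a).
  by apply/(clsE hK); rewrite -mulrBl; exact: (repcls hK' u).
have fqlin : forall c X Y, fq (c *: X + Y) = c *: fq X + fq Y.
  move=> c X Y; rewrite -(repK X) -(repK Y) clsZ clsD !fqE clsZ clsD.
  by rewrite mulrDl mulrA.
pose fl : {linear Q' -> Q} := HB.pack fq (GRing.isLinear.Build T Q' Q *:%R fq fqlin).
have fqinj : injective fl.
  move=> X Y; rewrite /= -(repK X) -(repK Y) !fqE => /(clsE hK) e.
  by apply/(clsE hK'); rewrite /K' mulrBl.
have idlin : forall c (X Y : Q'), id (c *: X + Y) = c *: id X + id Y by [].
pose gl : {linear Q' -> Q'} := HB.pack (@id Q') (GRing.isLinear.Build T Q' Q' *:%R id idlin).
have [h hh] := lv Q' simpQ' Q' Q fl gl fqinj.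
set r := rep (h (cls hK 1)).
have hE u : h (cls hK u) = cls hK' (u * r).
  have -> : cls hK u = u *: cls hK 1 by rewrite clsZ mulr1.
  by rewrite linearZZ -{1}(repK (h (cls hK 1))) clsZ.
have e1 := hh (cls hK' 1).
rewrite /= fqE mul1r hE in e1.
move/(clsE hK'): e1; rewrite /K' => e1.
have Ka : K' a by apply: LK; exists 1; rewrite mul1r.
have := @annB _ _ nomax simpQ' (cls hK' 1) a r.
rewrite !clsZ !mulr1 => /(_ ((proj2 (cls_eq0 hK' a)) Ka)) /(cls_eq0 hK').
rewrite /K' => Kara.
apply: nKa; have := KB hK Kara e1.
by rewrite mulrBl mul1r opprB addrC subrK.
Qed.

Section Alg.
Variable T : nzRingType.
Hypothesis sq : forall a : T, exists s, a = s * (a * a).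

Lemma red (a : T) : a * a = 0 -> a = 0.
Proof. by move=> h; have [s ->] := sq a; rewrite h mulr0. Qed.
Lemma swap0 (x y : T) : x * y = 0 -> y * x = 0.
Proof. by move=> h; apply: red; rewrite mulrA -(mulrA y) h mulr0 mul0r. Qed.
Lemma regT (a : T) : exists y, a = a * y * a.
Proof.
have [s hs] := sq a; exists s.
have ba : (a - a * s * a) * a = 0.
  by rewrite mulrBl -!mulrA -hs subrr.
have ab := swap0 ba.
have bb : (a - a * s * a) * (a - a * s * a) = 0.
  by rewrite mulrBl ab -(mulrA (a * s) a) ab mulr0 subrr.
by apply/eqP; rewrite -subr_eq0; apply/eqP; apply: red.
Qed.
Lemma idem_central (e t : T) : e * e = e -> e * t = t * e.
Proof.
move=> ee.
have h1 : e * t * (1 - e) = 0.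
  apply: red; rewrite -!mulrA (mulrA (1 - e) e) mulrBl mul1r ee subrr mul0r.
  by rewrite !mulr0.
have h2 : (1 - e) * t * e = 0.
  apply: red; rewrite -!mulrA (mulrA e (1 - e)) mulrBr mulr1 ee subrr mul0r.
  by rewrite !mulr0.
move: h1 h2; rewrite mulrBr mulr1 -mulrA mulrBl mul1r => /eqP; rewrite subr_eq0 => /eqP ->.
by move/eqP; rewrite subr_eq0 mulrA => /eqP.
Qed.

Lemma duoT : duo_ring T.
Proof.
split=> I [[I0 IB] IM].
- split; first by split.
  split; first by split.
  move=> r x Ix; have [y ey] := regT x.
  have ee : (y * x) * (y * x) = y * x by rewrite -mulrA (mulrA x y x) -ey.
  rewrite ey -(mulrA x y x) -(mulrA x (y * x) r) (idem_central r ee) !mulrA.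
  by apply: IM.
- split; last by split.
  split; first by split.
  move=> r x Ix; have [y ey] := regT x.
  have ee : (x * y) * (x * y) = x * y by rewrite mulrA -ey.
  rewrite ey (mulrA r (x * y) x) -(idem_central r ee) -!mulrA.
  by apply: IM.
Qed.
End Alg.

Lemma subring_c (T : nzRingType) (S : T -> Prop) :
  @is_subring T^c S -> @is_subring T S.
Proof.
move=> [S1 [SB SM]]; split => //; split => // x y Sx Sy.
exact: (SM y x).
Qed.

Lemma maxc (T : nzRingType) : has_maximal_subring T^c -> has_maximal_subring T.
Proof.
move=> [S [sS [x nx] mS]]; exists S; split => //; first exact: subring_c.
  by exists x.
move=> S' sS' sub; apply: mS => //.
case: sS' => [S1 [SB SM]]; split => //; split => // a b Sa Sb.
exact: (SM b a).
Qed.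

Theorem proposition2p8 (T : nzRingType) :
  left_V_ring T ->
  (has_maximal_subring T \/ duo_ring T) /\
  (~ has_maximal_subring T -> right_V_ring T).
Proof.
move=> lv; case: (pselect (has_maximal_subring T)) => [hm|nm].
  by split; [left | move=> /(_ hm)].
have sq := sq_div lv nm.
split; first by right; apply: duoT.
move=> _ M simpM.
apply: inj_main => //.
- move=> x; have [y ey] := regT sq x; exists y.
  rewrite [RHS]/(_ * _) /=. 
  by rewrite mulrA -ey.
- by apply: annB => // /maxc.
Qed.
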